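(* There exists a constant $\epsilon_{\mathrm{cut}}>0$ depending only on the black hole parameters such that the following holds: if $\omega\in\mathbb R$, $m\in\mathbb Z$, $\ell\ge|m|$ and $|\omega-\omega_rm|\le\epsilon_{\mathrm{cut}}m$ for some $r\in[r_-,r_+]$, then $$L:=\lambda_{m\ell}(a\omega)+a^2\omega^2-2m\omega a\Xi\ge c\,m^2$$ for a constant $c>0$ depending only on the black hole parameters.
   Context: Kerr–AdS parameters: $\Lambda<0$, $l=\sqrt{-3/\Lambda}$, $M>0$, $0<a<l$, $\Delta(r)=(r^2+a^2)(1+r^2/l^2)-2Mr$ with positive roots $r_-<r_+$ and $r_+^2>al$. $\Xi=1-a^2/l^2$, $\Delta_\theta=1-\frac{a^2}{l^2}\cos^2\theta$, $\omega_r=\frac{a\Xi}{r^2+a^2}$. $\lambda_{m\ell}(\xi)$, $\ell\ge|m|$, are the simple eigenvalues (in ascending order) of the self-adjoint Sturm–Liouville operator on $L^2((0,\pi);\sin\theta\,d\theta)$ $P(\xi)f=-\frac{1}{\sin\theta}\partial_\theta(\Delta_\theta\sin\theta\,\partial_\theta f)+\frac{\Xi^2m^2}{\Delta_\theta\sin^2\theta}f-\Xi\xi^2\Delta_\theta^{-1}\cos^2\theta f-2m\xi\frac{\Xi}{\Delta_\theta}\frac{a^2}{l^2}\cos^2\theta f+\frac{2}{l^2}a^2\sin^2\theta f$. *)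

(* Defs.v *)
From Stdlib Require Import Reals ZArith.
From Coquelicot Require Import Coquelicot.
Open Scope R_scope.

(* Kerr-AdS quantities; l = sqrt(-3/Lambda) > 0. *)
Definition Delta_r (l M a r : R) : R :=
  (r^2 + a^2) * (1 + r^2 / l^2) - 2 * M * r.

Definition Xi (l a : R) : R := 1 - a^2 / l^2.

Definition Delta_th (l a th : R) : R := 1 - a^2 / l^2 * (cos th)^2.

Definition omega_r (l a r : R) : R := a * Xi l a / (r^2 + a^2).

Definition P_pot (l a : R) (m : Z) (xi th : R) : R :=
  (Xi l a)^2 * (IZR m)^2 / (Delta_th l a th * (sin th)^2)
  - Xi l a * xi^2 / Delta_th l a th * (cos th)^2
  - 2 * IZR m * xi * Xi l a / Delta_th l a th * (a^2 / l^2) * (cos th)^2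
  + 2 / l^2 * a^2 * (sin th)^2.

(* lam is an eigenvalue of the self-adjoint Sturm-Liouville operator P(xi)
   (with azimuthal number m) on L^2((0,pi); sin th dth): there is a nonzero
   eigenfunction f in the operator domain (bounded on (0,pi), which selects
   the self-adjoint (Friedrichs) realization at the singular endpoints),
   twice differentiable in the Sturm-Liouville sense, with P(xi) f = lam f. *)
Definition is_P_eigenvalue (l a : R) (m : Z) (xi lam : R) : Prop :=
  exists f f' : R -> R,
    (exists th, 0 < th < PI /\ f th <> 0) /\
    (exists B, forall th, 0 < th < PI -> Rabs (f th) <= B) /\
    (forall th, 0 < th < PI -> is_derive f th (f' th)) /\
    (forall th, 0 < th < PI ->
        ex_derive (fun t => Delta_th l a t * sin t * f' t) th) /\
    (forall th, 0 < th < PI ->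
        - / sin th * Derive (fun t => Delta_th l a t * sin t * f' t) th
        + P_pot l a m xi th * f th = lam * f th).

(* Main.v *)
Require Import Defs.
From Stdlib Require Import Reals Lra Classical.
From Coquelicot Require Import Coquelicot.
Open Scope R_scope.

Lemma mono (F F' : R -> R) x y : x <= y ->
  (forall t, x <= t <= y -> is_derive F t (F' t)) ->
  (forall t, x <= t <= y -> 0 <= F' t) -> F x <= F y.
Proof.
  intros Hxy Hd Hp.
  destruct (MVT_gen F x y F') as [c [Hc Heq]].
  - intros t Ht. rewrite Rmin_left in Ht by lra. rewrite Rmax_right in Ht by lra.
    apply Hd; lra.
  - intros t Ht. rewrite Rmin_left in Ht by lra. rewrite Rmax_right in Ht by lra.
    apply derivable_continuous_pt. exists (F' t). apply is_derive_Reals, Hd; lra.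
  - rewrite Rmin_left in Hc by lra. rewrite Rmax_right in Hc by lra.
    assert (0 <= F' c) by (apply Hp; lra).
    assert (0 <= F' c * (y - x)) by (apply Rmult_le_pos; lra). lra.
Qed.

Lemma f2bound (f : R -> R) B t : Rabs (f t) <= B -> f t * f t <= B * B.
Proof. intro H. apply Rabs_le_between in H. nra. Qed.

Lemma no_bounded (D f f' W : R -> R) (t0 B : R) :
 (forall t, 0<t<PI -> 0 < D t <= 1) ->
 (forall t, 0<t<PI -> 0 < W t) ->
 (forall t, 0<t<PI -> is_derive f t (f' t)) ->
 (forall t, 0<t<PI -> is_derive (fun u => D u * sin u * f' u) t (sin t * W t * f t)) ->
 0<t0<PI -> f t0 <> 0 -> (forall t, 0<t<PI -> Rabs (f t) <= B) -> False.
Proof.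
  intros HD HW Hf Hg Ht0 Hf0 HB.
  set (g := fun u => D u * sin u * f' u) in *.
  set (h := fun u => f u * g u).
  set (h' := fun t => f' t * g t + f t * (sin t * W t * f t)).
  assert (Hsin : forall t, 0<t<PI -> 0 < sin t) by (intros; apply sin_gt_0; lra).
  assert (Hh : forall t, 0<t<PI -> is_derive h t (h' t)).
  { intros t Ht. exact (is_derive_mult f g t _ _ (Hf t Ht) (Hg t Ht) Rmult_comm). }
  assert (Hh'pos : forall t, 0<t<PI -> 0 <= h' t).
  { intros t Ht. unfold h', g. specialize (HD t Ht). specialize (HW t Ht). specialize (Hsin t Ht).
    assert (0 <= D t * sin t * (f' t * f' t)) by (apply Rmult_le_pos; [nra| nra]).
    assert (0 <= sin t * W t * (f t * f t)) by (apply Rmult_le_pos; [nra| nra]). nra. }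
  assert (Hh't0 : 0 < h' t0).
  { unfold h', g. specialize (HD t0 Ht0). specialize (HW t0 Ht0). specialize (Hsin t0 Ht0).
    assert (0 <= D t0 * sin t0 * (f' t0 * f' t0)) by (apply Rmult_le_pos; [nra| nra]).
    assert (0 < f t0 * f t0) by (destruct (Rlt_or_le 0 (f t0)); [nra| assert (f t0 < 0) by lra; nra]).
    assert (0 < sin t0 * W t0 * (f t0 * f t0)) by (apply Rmult_lt_0_compat; [nra| nra]). nra. }
  assert (Hff : forall t, 0<t<PI -> f t * f' t * (D t * sin t) = h t).
  { intros t Ht. unfold h, g. ring. }
  assert (Hhmono : forall x y, 0 < x -> x <= y -> y < PI -> h x <= h y).
  { intros x y Hx Hxy Hy. apply (mono h h'); auto; intros; [apply Hh|apply Hh'pos]; lra. }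
  destruct (classic (exists t1, 0 < t1 < PI /\ h t1 <> 0)) as [[t1 [Ht1 Hh1]] | Hnone].
  - destruct (Rlt_or_le 0 (h t1)) as [Hpos | Hneg].
    + set (h1 := h t1) in *.
      set (Phi := fun t => f t * f t + 2 * h1 * ln (PI - t)).
      set (Phi' := fun t => 2 * (f t * f' t) + 2 * h1 * (- / (PI - t))).
      assert (HPhi : forall t, t1 <= t < PI -> Phi t1 <= Phi t).
      { intros t Ht. apply (mono Phi Phi'); [lra| |].
        - intros u Hu. unfold Phi, Phi'.
          apply (is_derive_plus (fun u => f u * f u) (fun u => 2 * h1 * ln (PI - u))).
          + replace (2 * (f u * f' u)) with (f' u * f u + f u * f' u) by ring.
            exact (is_derive_mult f f u _ _ (Hf u ltac:(lra)) (Hf u ltac:(lra)) Rmult_comm).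
          + apply is_derive_scal. auto_derive. lra. field. lra.
        - intros u Hu. unfold Phi'.
          assert (Hu' : 0 < u < PI) by lra.
          assert (h1 <= h u) by (apply Hhmono; lra).
          specialize (Hff u Hu'). specialize (HD u Hu'). 
          assert (sin u < PI - u) by (rewrite <- sin_PI_x; apply sin_lt_x; lra).
          assert (0 < sin u) by (apply Hsin; lra).
          set (p := f u * f' u) in *.
          assert (0 < D u * sin u <= sin u) by (split; nra).
          assert (p * (PI - u) >= h1) by nra.
          assert (h1 / (PI - u) <= p).
          { apply (Rmult_le_reg_r (PI - u)); [lra|]. unfold Rdiv. rewrite Rmult_assoc, Rinv_l by lra. lra. }
          unfold Rdiv in *. lra. }
      set (K := Rmax ((B * B - Phi t1) / (2 * h1)) (- ln (PI - t1)) + 1).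
      assert (HK1 : (B * B - Phi t1) / (2 * h1) < K) by (unfold K; generalize (Rmax_l ((B * B - Phi t1) / (2 * h1)) (- ln (PI - t1))); lra).
      assert (HK2 : - ln (PI - t1) < K) by (unfold K; generalize (Rmax_r ((B * B - Phi t1) / (2 * h1)) (- ln (PI - t1))); lra).
      set (t := PI - exp (- K)).
      assert (He : exp (- K) < PI - t1).
      { rewrite <- (exp_ln (PI - t1)) by lra. apply exp_increasing. lra. }
      assert (He0 : 0 < exp (-K)) by apply exp_pos.
      assert (Htt : t1 <= t < PI) by (unfold t; lra).
      specialize (HPhi t Htt).
      assert (Hb := f2bound f B t (HB t ltac:(lra))).
      unfold Phi in HPhi. unfold t in HPhi at 3. replace (PI - (PI - exp (- K))) with (exp (- K)) in HPhi by ring.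
      rewrite ln_exp in HPhi. fold t in HPhi.
      assert (2 * h1 * K > B * B - Phi t1).
      { apply (Rmult_lt_reg_r (/ (2 * h1))). apply Rinv_0_lt_compat; lra.
        replace (2 * h1 * K * / (2 * h1)) with K by (field; lra). exact HK1. }
      unfold Phi in H. lra.
    + assert (Hneg' : h t1 < 0) by lra. clear Hneg.
      set (h1 := h t1) in *.
      set (Psi := fun t => 2 * h1 * ln t - f t * f t).
      set (Psi' := fun t => 2 * h1 * / t - 2 * (f t * f' t)).
      assert (HPsi : forall t, 0 < t <= t1 -> Psi t <= Psi t1).
      { intros t Ht. apply (mono Psi Psi'); [lra| |].
        - intros u Hu. unfold Psi, Psi'.
          apply (is_derive_minus (fun u => 2 * h1 * ln u) (fun u => f u * f u)).
          + apply is_derive_scal. apply is_derive_ln. lra.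
          + replace (2 * (f u * f' u)) with (f' u * f u + f u * f' u) by ring.
            exact (is_derive_mult f f u _ _ (Hf u ltac:(lra)) (Hf u ltac:(lra)) Rmult_comm).
        - intros u Hu. unfold Psi'.
          assert (Hu' : 0 < u < PI) by lra.
          assert (h u <= h1) by (apply Hhmono; lra).
          specialize (Hff u Hu'). specialize (HD u Hu').
          assert (sin u < u) by (apply sin_lt_x; lra).
          assert (0 < sin u) by (apply Hsin; lra).
          set (p := f u * f' u) in *.
          assert (0 < D u * sin u <= sin u) by (split; nra).
          assert (p * u <= h1) by nra.
          assert (p <= h1 / u).
          { apply (Rmult_le_reg_r u); [lra|]. unfold Rdiv. rewrite Rmult_assoc, Rinv_l by lra. lra. }
          unfold Rdiv in *. lra. }
      set (K := Rmax ((Psi t1 + B * B) / (- 2 * h1)) (- ln t1) + 1).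
      assert (HK1 : (Psi t1 + B * B) / (- 2 * h1) < K) by (unfold K; generalize (Rmax_l ((Psi t1 + B * B) / (- 2 * h1)) (- ln t1)); lra).
      assert (HK2 : - ln t1 < K) by (unfold K; generalize (Rmax_r ((Psi t1 + B * B) / (- 2 * h1)) (- ln t1)); lra).
      set (t := exp (- K)).
      assert (He : t < t1).
      { unfold t. rewrite <- (exp_ln t1) by lra. apply exp_increasing. lra. }
      assert (He0 : 0 < t) by apply exp_pos.
      specialize (HPsi t ltac:(lra)).
      assert (Hb := f2bound f B t (HB t ltac:(lra))).
      unfold Psi in HPsi at 1. unfold t in HPsi at 1. rewrite ln_exp in HPsi. fold t in HPsi.
      assert (- 2 * h1 * K > Psi t1 + B * B).
      { apply (Rmult_lt_reg_r (/ (- 2 * h1))). apply Rinv_0_lt_compat; lra.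
        replace (- 2 * h1 * K * / (- 2 * h1)) with K by (field; lra). exact HK1. }
      lra.
  - assert (Hz : forall t, 0 < t < PI -> h t = 0).
    { intros t Ht. apply NNPP. intro Hc. apply Hnone. exists t. auto. }
    assert (Hd0 : is_derive h t0 0).
    { apply (is_derive_ext_loc (fun _ => 0)).
      - assert (Hm : 0 < Rmin t0 (PI - t0)) by (apply Rmin_pos; lra).
        exists (mkposreal _ Hm). intros y Hy. change (Rabs (y - t0) < Rmin t0 (PI - t0)) in Hy.
        apply Rabs_lt_between in Hy.
        generalize (Rmin_l t0 (PI - t0)) (Rmin_r t0 (PI - t0)). intros.
        symmetry. apply Hz. lra.
      - auto_derive; auto. }
    assert (h' t0 = 0).
    { rewrite <- (is_derive_unique h t0 (h' t0) (Hh t0 Ht0)). apply is_derive_unique. exact Hd0. }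
    lra.
Qed.

Lemma alg (al X M xi s lam c delta : R) : 0<al<1 -> X = 1 - al -> 0<s<=1 -> 0 <= M ->
  0<delta<=1 -> xi <= X*M*(1-delta) -> c = (X*delta)^2 ->
  lam + xi^2 - 2*M*xi*X < c*M^2 ->
  0 < X^2*M^2/((1-al*(1-s))*s) - X*xi^2/(1-al*(1-s))*(1-s)
      - 2*M*xi*X/(1-al*(1-s))*al*(1-s) + 2*al*s - lam.
Proof.
  intros Hal HX Hs HM Hd Hxi Hc HL.
  assert (HD : 0 < 1 - al*(1-s) <= 1) by nra.
  set (q := (1 - al*(1-s)) * s).
  assert (Hq : 0 < q <= 1) by (unfold q; split; nra).
  replace (X^2*M^2/q - X*xi^2/(1-al*(1-s))*(1-s)
      - 2*M*xi*X/(1-al*(1-s))*al*(1-s))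
   with ((X*M - xi*s)^2 / q - xi^2 + 2*M*xi*X) by (unfold q; subst X; field; lra).
  clearbody q.
  assert (Hy : X*M*delta <= X*M - xi*s).
  { destruct (Rle_or_lt 0 xi).
    - assert (xi*s <= xi) by nra. nra.
    - assert (xi * s < 0) by nra. assert (0 <= X*M*(1-delta)) by (apply Rmult_le_pos; nra). nra. }
  assert (0 <= X*M*delta) by (apply Rmult_le_pos; [apply Rmult_le_pos|]; lra).
  assert ((X*M*delta)^2 <= (X*M - xi*s)^2) by nra.
  assert ((X*M - xi*s)^2 <= (X*M - xi*s)^2 / q).
  { apply (Rmult_le_reg_r q); [lra|]. unfold Rdiv. rewrite Rmult_assoc, Rinv_l by lra.
    assert (0 <= (X*M - xi*s)^2) by nra. nra. }
  assert (0 <= 2*al*s) by nra.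
  subst c. replace ((X*delta)^2*M^2) with ((X*M*delta)^2) in HL by ring. lra.
Qed.



Theorem lemma8p4 :
  forall (l M a rm rp : R),
    0 < l -> 0 < M -> 0 < a -> a < l ->
    0 < rm -> rm < rp ->
    Delta_r l M a rm = 0 -> Delta_r l M a rp = 0 ->
    a * l < rp^2 ->
    exists eps_cut : R, 0 < eps_cut /\
    exists c : R, 0 < c /\
    forall (omega : R) (m : Z) (lam : R),
      (exists r, rm <= r <= rp /\
         Rabs (omega - omega_r l a r * IZR m) <= eps_cut * IZR m) ->
      is_P_eigenvalue l a m (a * omega) lam ->
      c * (IZR m)^2 <= lam + a^2 * omega^2 - 2 * IZR m * omega * a * Xi l a.
Proof.
  intros l M a rm rp Hl HM Ha Hal Hrm Hrmp _ _ _.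
  assert (Hl2 : 0 < l^2) by (apply pow_lt; lra).
  set (al := a^2/l^2).
  assert (Hal' : 0 < al < 1).
  { unfold al. split. apply Rdiv_lt_0_compat; [apply pow_lt|]; lra.
    apply (proj1 (Rdiv_lt_1 _ _ Hl2)). replace (a^2) with (a*a) by ring. replace (l^2) with (l*l) by ring. nra. }
  assert (HX : Xi l a = 1 - al) by reflexivity.
  set (X := Xi l a) in *.
  set (delta := rm^2/(2*(rm^2+a^2))).
  assert (Hra : 0 < rm^2 + a^2) by nra.
  assert (Hdel : 0 < delta <= 1).
  { unfold delta. split. apply Rdiv_lt_0_compat; nra.
    apply (Rmult_le_reg_r (2*(rm^2+a^2))); [lra|]. unfold Rdiv. rewrite Rmult_assoc, Rinv_l by lra. nra. }
  set (eps := X*rm^2/(2*a*(rm^2+a^2))).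
  exists eps. split.
  { unfold eps. apply Rdiv_lt_0_compat. apply Rmult_lt_0_compat; nra.
    apply Rmult_lt_0_compat; nra. }
  exists ((X*delta)^2). split.
  { apply pow_lt. apply Rmult_lt_0_compat; lra. }
  intros omega m lam [r [Hr Habs]] [f [f' [[t0 [Ht0 Hf0]] [[B HB] [Hd [Hex Heq]]]]]].
  apply Rnot_lt_le; intro HL.
  assert (Heps : 0 < eps).
  { unfold eps. apply Rdiv_lt_0_compat. apply Rmult_lt_0_compat; nra.
    apply Rmult_lt_0_compat; nra. }
  set (Mm := IZR m) in *.
  assert (HMm : 0 <= Mm).
  { assert (0 <= eps * Mm) by (eapply Rle_trans; [apply Rabs_pos| exact Habs]). nra. }
  set (xi := a * omega).
  assert (Hxi : xi <= X*Mm*(1-delta)).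
  { apply Rle_trans with (a * omega_r l a r * Mm + a * eps * Mm).
    { unfold xi. generalize (Rle_abs (omega - omega_r l a r * Mm)). intro. nra. }
    assert (Hor : a * omega_r l a r <= a^2 * X * / (rm^2+a^2)).
    { unfold omega_r. fold X. replace (a * (a * X / (r^2+a^2))) with (a^2*X * / (r^2+a^2)) by (field; nra).
      apply Rmult_le_compat_l. apply Rmult_le_pos; nra.
      apply Rinv_le_contravar; nra. }
    replace (X*Mm*(1-delta)) with (a^2 * X * / (rm^2+a^2) * Mm + a * eps * Mm)
      by (unfold eps, delta; field; split; lra).
    nra. }
  apply (no_bounded (Delta_th l a) f f' (fun t => P_pot l a m xi t - lam) t0 B).
  - intros t Ht. unfold Delta_th. fold al. generalize (sin2_cos2 t). unfold Rsqr. intro.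
    assert (0 <= cos t ^2 <= 1) by nra. nra.
  - intros t Ht. assert (Hs : 0 < sin t) by (apply sin_gt_0; lra).
    generalize (sin2_cos2 t). unfold Rsqr. intro Hsc.
    assert (Hc : cos t ^ 2 = 1 - sin t ^ 2) by nra.
    unfold P_pot, Delta_th. fold X. fold al. fold Mm. rewrite Hc.
    replace (2 / l ^ 2 * a ^ 2 * sin t ^ 2) with (2 * al * sin t ^ 2) by (unfold al; field; lra).
    apply (alg al X Mm xi (sin t ^ 2) lam ((X*delta)^2) delta); auto.
    + split. apply pow_lt; lra. nra.
    + fold xi in HL. replace (lam + xi ^ 2 - 2 * Mm * xi * X) with (lam + a ^ 2 * omega ^ 2 - 2 * Mm * omega * a * X) by (unfold xi; ring). exact HL.
  - exact Hd.
  - intros t Ht. assert (Hs : 0 < sin t) by (apply sin_gt_0; lra).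
    specialize (Heq t Ht).
    assert (E : Derive (fun t0 : R => Delta_th l a t0 * sin t0 * f' t0) t = sin t * (P_pot l a m xi t - lam) * f t).
    { set (dd := Derive (fun t0 : R => Delta_th l a t0 * sin t0 * f' t0) t) in *.
      replace dd with (sin t * (/ sin t * dd)) by (field; lra). fold xi in Heq.
      replace (/ sin t * dd) with (P_pot l a m xi t * f t - lam * f t) by lra. ring. }
    rewrite <- E. apply Derive_correct. apply Hex. exact Ht.
  - exact Ht0.
  - exact Hf0.
  - exact HB.
Qed.
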